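(* Let $\mathcal{C}=\{(a_i,b_i,y_i)\}_{i=1}^{|\mathcal{C}|}$ be a set of constraints, $\omega>0$, and let embeddings $\boldsymbol{z}_j\in\mathbb{R}^D\setminus\{\mathbf 0\}$ satisfy $\mathcal{L}_{\mathrm{ang}}\le\varepsilon$ for some $\varepsilon>0$. Then: (i) for each positive constraint $(a_i,b_i,1)\in\mathcal{C}$, $0\le\theta_{\boldsymbol{z}_{a_i},\boldsymbol{z}_{b_i}}\le\Delta^+(\varepsilon):=\arccos\big(2e^{-|\mathcal{C}|\varepsilon}-1\big)$, and $\Delta^+(\varepsilon)\approx 2\sqrt{|\mathcal{C}|\varepsilon}$ as $\varepsilon\to0$; (ii) for each negative constraint $(a_i,b_i,0)\in\mathcal{C}$ with $\theta_{\boldsymbol{z}_{a_i},\boldsymbol{z}_{b_i}}\le\pi/\omega$, $0\le\frac{\pi}{\omega}-\theta_{\boldsymbol{z}_{a_i},\boldsymbol{z}_{b_i}}\le\Delta^-(\varepsilon):=\frac{1}{\omega}\arccos\big(2e^{-|\mathcal{C}|\varepsilon}-1\big)$, and $\Delta^-(\varepsilon)\approx 2\sqrt{|\mathcal{C}|\varepsilon}/\omega$ as $\varepsilon\to0$ (here $\approx$ means the ratio tends to $1$).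
   Context: For nonzero vectors, $\theta_{\boldsymbol{u},\boldsymbol{v}}\in[0,\pi]$ is the angle. The loss is $\mathcal{L}_{\mathrm{ang}}=-\frac{1}{|\mathcal{C}|}\sum_{i}\big(y_i\log \mathrm{Sim}(a_i,b_i)+(1-y_i)\log(1-\mathrm{Sim}(a_i,b_i))\big)$, with $\mathrm{Sim}(a_i,b_i)=\tfrac12(\cos\theta_{\boldsymbol{z}_{a_i},\boldsymbol{z}_{b_i}}+1)$ if $y_i=1$ and $\mathrm{Sim}(a_i,b_i)=\tfrac12(\cos(\min(\omega\theta_{\boldsymbol{z}_{a_i},\boldsymbol{z}_{b_i}},\pi))+1)$ if $y_i=0$. *)

(* Defs.v *)
From HB Require Import structures.
From mathcomp Require Import all_boot all_order all_algebra.
From mathcomp Require Import all_classical all_reals all_analysis.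
Set Implicit Arguments. Unset Strict Implicit. Unset Printing Implicit Defensive.
Import Order.TTheory GRing.Theory Num.Theory.
Import numFieldNormedType.Exports.
Local Open Scope ring_scope.

Section AngDefs.
Context {R : realType}.

Definition dotv (D : nat) (u v : 'rV[R]_D) : R := \sum_(k < D) u 0 k * v 0 k.
Definition normv (D : nat) (u : 'rV[R]_D) : R := Num.sqrt (dotv u u).

Definition angle (D : nat) (u v : 'rV[R]_D) : R :=
  acos (dotv u v / (normv u * normv v)).

Definition Sim (D : nat) (omega : R) (u v : 'rV[R]_D) (y : bool) : R :=
  if y then (cos (angle u v) + 1) / 2
  else (cos (Num.min (omega * angle u v) pi) + 1) / 2.

(* logarithm with log 0 = -oo (so that an infinite loss is really infinite) *)
Definition elog (x : R) : \bar R := if 0 < x then (ln x)%:E else -oo%E.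

(* the angular loss L_ang, extended-real valued;
   constraints indexed by 'I_M (|C| = M), embeddings indexed by 'I_N *)
Definition L_ang (D N M : nat) (omega : R) (z : 'I_N -> 'rV[R]_D)
  (a b : 'I_M -> 'I_N) (y : 'I_M -> bool) : \bar R :=
  (- ((M%:R)^-1)%:E *
   \sum_(i < M) (((y i)%:R)%:E * elog (Sim omega (z (a i)) (z (b i)) (y i))
                 + ((1 - (y i)%:R))%:E * elog (1 - Sim omega (z (a i)) (z (b i)) (y i))))%E.

Definition Delta_plus (M : nat) (eps : R) : R :=
  acos (2 * expR (- (M%:R * eps)) - 1).

Definition Delta_minus (omega : R) (M : nat) (eps : R) : R :=
  omega^-1 * acos (2 * expR (- (M%:R * eps)) - 1).

End AngDefs.

(* Main.v *)
Require Import Defs.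
From HB Require Import structures.
From mathcomp Require Import all_boot all_order all_algebra.
From mathcomp Require Import all_classical all_reals all_analysis.
From mathcomp Require Import ring lra.
Import Order.TTheory GRing.Theory Num.Theory.
Import numFieldNormedType.Exports.
Local Open Scope classical_set_scope.
Local Open Scope ring_scope.

Section S.
Variable R : realType.


Lemma sin_le_id (x : R) : 0 <= x -> sin x <= x.
Proof.
move=> x0.
have D (t : R) : is_derive t 1 (fun t : R => t - sin t) (1 - cos t).
  by apply: is_deriveB.
have C : {within [set` `[0, x]], continuous (fun t : R => t - sin t)}.
  apply: derivable_within_continuous => t _; exact: ex_derive.
have [c _ E] := @MVT_segment R (fun t => t - sin t) (fun t => 1 - cos t) 0 x x0
  (fun t _ => D t) C.
move: E; rewrite sin0 subr0 subr0 => E.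
rewrite -subr_ge0 E subr0 mulr_ge0 // subr_ge0; exact: cos_le1.
Qed.

Lemma id_cos_le_sin (x : R) : 0 <= x <= pi -> x * cos x <= sin x.
Proof.
move=> /andP[x0 xpi].
have D (t : R) : is_derive t 1 (fun t : R => sin t - t * cos t) (t * sin t).
  have H1 : is_derive t 1 (fun t : R => t * cos t) (t * - sin t + cos t * 1).
    exact: (@is_deriveM R R id cos t 1 1 (- sin t) _ _).
  have H2 := @is_deriveB R R R sin (fun t : R => t * cos t) t 1 _ _ (is_derive_sin t) H1.
  apply: is_derive_eq H2 _.
  by rewrite mulr1; lra.
have C : {within [set` `[0, x]], continuous (fun t : R => sin t - t * cos t)}.
  apply: derivable_within_continuous => t _; exact: ex_derive.
have [c cI E] := @MVT_segment R (fun t => sin t - t * cos t) (fun t => t * sin t) 0 x x0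
  (fun t _ => D t) C.
move: E; rewrite sin0 mul0r subr0 subr0 => E.
rewrite -subr_ge0 E; move: cI; rewrite in_itv /= => /andP[c0 cx].
rewrite subr0 !mulr_ge0 // sin_ge0_pi // c0 /=; exact: le_trans cx xpi.
Qed.


Lemma sum3 (D : nat) (F G H : 'I_D -> 'I_D -> R) :
  \sum_j \sum_k (F j k + G j k - H j k) =
  \sum_j \sum_k F j k + \sum_j \sum_k G j k - \sum_j \sum_k H j k.
Proof.
rewrite -big_split -sumrB /=; apply: eq_bigr => j _.
by rewrite -big_split -sumrB.
Qed.

Lemma cs (D : nat) (u v : 'I_D -> R) :
  (\sum_k u k * v k) ^+ 2 <= (\sum_k u k ^+ 2) * (\sum_k v k ^+ 2).
Proof.
have H : 0 <= \sum_j \sum_k (u j * v k - u k * v j) ^+ 2.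
  by apply: sumr_ge0 => j _; apply: sumr_ge0 => k _; apply: sqr_ge0.
have E : \sum_j \sum_k (u j * v k - u k * v j) ^+ 2 =
   \sum_j \sum_k (u j ^+ 2 * v k ^+ 2 + u k ^+ 2 * v j ^+ 2
                  - 2 * ((u j * v j) * (u k * v k))).
  by apply: eq_bigr => j _; apply: eq_bigr => k _; ring.
rewrite E sum3 in H.
have E1 : \sum_j \sum_k u j ^+ 2 * v k ^+ 2 = (\sum_k u k ^+ 2) * (\sum_k v k ^+ 2).
  by rewrite big_distrlr.
have E2 : \sum_j \sum_k u k ^+ 2 * v j ^+ 2 = (\sum_k u k ^+ 2) * (\sum_k v k ^+ 2).
  by rewrite exchange_big big_distrlr.
have E3 : \sum_j \sum_k 2 * ((u j * v j) * (u k * v k)) = 2 * (\sum_k u k * v k) ^+ 2.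
  rewrite expr2 big_distrlr mulr_sumr; apply: eq_bigr => j _.
  by rewrite mulr_sumr.
rewrite E1 E2 E3 in H.
lra.
Qed.

Lemma dot_range (D : nat) (u v : 'rV[R]_D) :
  -1 <= dotv u v / (normv u * normv v) <= 1.
Proof.
rewrite /normv.
have A0 : 0 <= dotv u u by apply: sumr_ge0 => k _; rewrite -expr2 sqr_ge0.
have B0 : 0 <= dotv v v by apply: sumr_ge0 => k _; rewrite -expr2 sqr_ge0.
have C := @cs D (fun k => u 0 k) (fun k => v 0 k).
rewrite -sqrtrM //.
have [AB|AB] := eqVneq (dotv u u * dotv v v) 0.
  by rewrite AB sqrtr0 invr0 mulr0; lra.
have P : 0 < dotv u u * dotv v v by rewrite lt_neqAle eq_sym AB mulr_ge0.
set x := _ / _.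
have X2 : x ^+ 2 <= 1.
  rewrite /x expr_div_n sqr_sqrtr ?mulr_ge0 // ler_pdivrMr // mul1r.
  rewrite /dotv.
  have -> : \sum_(k < D) u 0 k * u 0 k = \sum_k u 0 k ^+ 2.
    by apply: eq_bigr => k _; rewrite expr2.
  have -> : \sum_(k < D) v 0 k * v 0 k = \sum_k v 0 k ^+ 2.
    by apply: eq_bigr => k _; rewrite expr2.
  exact: C.
nra.
Qed.


Lemma elog_le0 (x : R) : x <= 1 -> (elog x <= 0)%E.
Proof.
rewrite /elog; case: ifP => // _ x1; rewrite lee_fin; exact: ln_le0.
Qed.

Lemma loss_bound (D N M : nat) (a b : 'I_M -> 'I_N) (y : 'I_M -> bool) (omega eps : R)
  (z : 'I_N -> 'rV[R]_D) :
  (0 < M)%N -> (L_ang omega z a b y <= eps%:E)%E ->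
  forall i, expR (- (M%:R * eps)) <=
    (if y i then Sim omega (z (a i)) (z (b i)) true
     else 1 - Sim omega (z (a i)) (z (b i)) false).
Proof.
move=> M0 HL i.
set q := fun j => if y j then Sim omega (z (a j)) (z (b j)) true
     else 1 - Sim omega (z (a j)) (z (b j)) false.
have Tq j : (((y j)%:R)%:E * elog (Sim omega (z (a j)) (z (b j)) (y j))
           + ((1 - (y j)%:R))%:E * elog (1 - Sim omega (z (a j)) (z (b j)) (y j)))%E
          = elog (q j).
  rewrite /q; case: (y j) => /=.
    by rewrite subrr mul0e adde0 mul1e.
  by rewrite subr0 mul0e add0e mul1e.
have q1 j : q j <= 1.
  rewrite /q /Sim; case: (y j).
    have := cos_le1 (angle (z (a j)) (z (b j))); lra.
  have := cos_geN1 (Num.min (omega * angle (z (a j)) (z (b j))) pi); lra.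
have Mp : 0 < (M%:R : R) by rewrite ltr0n.
set c := (M%:R : R)^-1.
have c0 : 0 < c by rewrite invr_gt0.
move: HL; rewrite /L_ang -/c.
under eq_bigr do rewrite Tq.
rewrite -EFinN le0_sume_distrr; last by move=> j _; apply: elog_le0.
rewrite (bigD1 i) //= => HL.
have Hi : ((- c)%:E * elog (q i) <= eps%:E)%E.
  apply: le_trans HL; apply: leeDl; apply: sume_ge0 => j _.
  apply: mule_le0; first by rewrite lee_fin; lra.
  exact: elog_le0.
have [qpos|qneg] := ltP 0 (q i); last first.
  move: Hi; rewrite /elog ltNge qneg /= mulrNy sgrN gtr0_sg // EFinN mulN1e /=.
  by rewrite leNgt ltey.
move: Hi; rewrite /elog qpos.
rewrite -EFinM lee_fin => Hi.
rewrite -/(q i) -(lnK qpos) ler_expR.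
have : - c * ln (q i) * M%:R <= eps * M%:R by rewrite ler_pM2r.
rewrite /c mulrAC mulNr mulVf ?gt_eqF //; lra.
Qed.



Lemma ratio_bounds (t : R) : 0 < t < 1 ->
  (1 + t)^-1 <= acos (2 * expR (- t) - 1) / (2 * Num.sqrt t) <= (1 - t)^-1.
Proof.
move=> /andP[t0 t1].
set E := expR (- t).
have E0 : 0 < E by apply: expR_gt0.
have E1 : 1 - t <= E by rewrite /E; have := expR_ge1Dx (- t); lra.
have E2 : E * (1 + t) <= 1.
  rewrite /E expRN; have := expR_ge1Dx t => H.
  rewrite ler_pdivrMl ?expR_gt0 // mulr1; lra.
set c := 2 * E - 1.
have cI : -1 <= c <= 1.
  apply/andP; split; rewrite /c; first lra.
  suff : E <= 1 by lra.
  rewrite /E -expR0 ler_expR; lra.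
have [/andP[th0 thpi] cth] := acos_def cI.
set th := acos c in th0 thpi cth *.
set s := Num.sqrt t.
have s0 : 0 < s by rewrite sqrtr_gt0.
have s2 : s ^+ 2 = t by rewrite sqr_sqrtr // ltW.
set h := th / 2.
have thh : th = h *+ 2 by rewrite /h -mulr_natr mulfVK // pnatr_eq0.
have h0 : 0 <= h by rewrite /h divr_ge0.
have hpi : h <= pi by rewrite /h; have := pi_ge0 R; lra.
have hpi2 : h <= pi / 2 by rewrite /h ler_pM2r //.
have ch0 : 0 <= cos h by apply: cos_ge0_pihalf; rewrite hpi2 andbT; have := pi_ge0 R; lra.
have sh0 : 0 <= sin h by apply: sin_ge0_pi; rewrite h0 hpi.
have C2 : cos h ^+ 2 = E.
  move: cth; rewrite thh cos_mulr2n /c mulr2n; lra.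
have S2 : sin h ^+ 2 = 1 - E by rewrite sin2cos2 C2.
have Hs : sin h <= h by apply: sin_le_id.
have Hc : h * cos h <= sin h by apply: id_cos_le_sin; rewrite h0 hpi.
have -> : th / (2 * s) = h / s by rewrite /h invfM mulrA.
have sq (p q : R) : 0 <= q -> p ^+ 2 <= q ^+ 2 -> p <= q.
  move=> q0 pq; case: (lerP p q) => // qp; nra.
apply/andP; split.
- rewrite ler_pdivlMr // mulrC ler_pdivrMr; last lra.
  have : s <= sin h * (1 + t).
    apply: sq; first by apply: mulr_ge0 => //; lra.
    rewrite s2 exprMn S2; nra.
  nra.
- rewrite ler_pdivrMr // mulrC ler_pdivlMr; last lra.
  have : 1 - t <= cos h by apply: sq => //; rewrite C2; nra.
  have : sin h <= s by apply: sq; [lra | rewrite s2 S2; lra].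
  nra.
Qed.



Lemma lim_inv (k : R) : (1 + k * x)^-1 @[x --> (0:R)^'+] --> (1:R).
Proof.
apply: cvg_at_right_filter.
have L : (1 + k * x) @[x --> (0:R)] --> 1 + k * 0.
  apply: cvgD; first exact: cvg_cst.
  apply: cvgMr; exact: cvg_id.
rewrite mulr0 addr0 in L.
have := @cvgV _ _ (nbhs (0:R)) _ (fun x : R => 1 + k * x) 1.
rewrite invr1 oner_neq0 => H; exact: H.
Qed.

Lemma lim_ratio (M : nat) : (0 < M)%N ->
  Delta_plus M x / (2 * Num.sqrt (M%:R * x)) @[x --> (0:R)^'+] --> (1:R).
Proof.
move=> M0.
have Mp : 0 < (M%:R : R) by rewrite ltr0n.
apply: (@squeeze_cvgr _ _ _ _ (fun x => (1 + M%:R * x)^-1) (fun x => (1 + (- M%:R) * x)^-1)); last first.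
- exact: lim_inv.
- exact: lim_inv.
near=> x.
have x0 : 0 < x by near: x; exact: nbhs_right_gt.
have x1 : x < (M%:R)^-1 by near: x; apply: nbhs_right_lt; rewrite invr_gt0.
have := @ratio_bounds (M%:R * x).
rewrite /Delta_plus mulNr.
apply; rewrite mulr_gt0 //=.
by rewrite mulrC -ltr_pdivlMr // div1r.
Unshelve. all: end_near.
Qed.

Lemma acos_le (c t : R) : -1 <= c <= 1 -> 0 <= t <= pi -> c <= cos t -> t <= acos c.
Proof.
move=> cI tI ct.
have [aI ca] := acos_def cI.
case: (lerP t (acos c)) => // lt.
have : cos t < cos (acos c).
  by rewrite ltr_cos // in_itv /=.
by rewrite ca => /(le_lt_trans ct); rewrite ltxx.
Qed.

Lemma angle_range (D : nat) (u v : 'rV[R]_D) : 0 <= angle u v <= pi.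
Proof. by have [] := acos_def (dot_range _ u v). Qed.
End S.

Theorem corollary1 (R : realType) (D N M : nat)
  (a b : 'I_M -> 'I_N) (y : 'I_M -> bool) (omega eps : R)
  (z : 'I_N -> 'rV[R]_D) :
  (0 < M)%N -> 0 < omega -> 0 < eps ->
  (forall j, z j != 0) ->
  (L_ang omega z a b y <= eps%:E)%E ->
  ((forall i, y i = true ->
      0 <= angle (z (a i)) (z (b i)) <= Delta_plus M eps)
   /\ Delta_plus M x / (2 * Num.sqrt (M%:R * x)) @[x --> (0:R)^'+] --> (1:R))
  /\
  ((forall i, y i = false -> angle (z (a i)) (z (b i)) <= pi / omega ->
      0 <= pi / omega - angle (z (a i)) (z (b i)) <= Delta_minus omega M eps)
   /\ Delta_minus omega M x / (2 * Num.sqrt (M%:R * x) / omega)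
        @[x --> (0:R)^'+] --> (1:R)).
Proof.
move=> M0 w0 e0 nz HL.
have LB := @loss_bound R D N M a b y omega eps z M0 HL.
set e := expR (- (M%:R * eps)) in LB.
have E0 : 0 < e by apply: expR_gt0.
have E1 : e <= 1.
  rewrite /e -expR0 ler_expR oppr_le0 mulr_ge0 // ?ler0n //; exact: ltW.
have cI : -1 <= 2 * e - 1 <= 1 by apply/andP; split; lra.
have wn0 : omega != 0 by rewrite gt_eqF.
split; split.
- move=> i yi; have := LB i; rewrite yi /Sim => H.
  have /andP[t0 tpi] := angle_range _ _ (z (a i)) (z (b i)).
  rewrite t0 /= /Delta_plus -/e; apply: acos_le => //; first by rewrite t0 tpi.
  lra.
- exact: lim_ratio.
- move=> i yi hle; have := LB i; rewrite yi /Sim => H.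
  have /andP[t0 tpi] := angle_range _ _ (z (a i)) (z (b i)).
  set th := angle (z (a i)) (z (b i)) in H t0 tpi hle *.
  have wth : omega * th <= pi by rewrite mulrC -ler_pdivlMr.
  rewrite min_l // in H.
  have phiI : 0 <= pi - omega * th <= pi.
    apply/andP; split; first lra.
    have : 0 <= omega * th by apply: mulr_ge0 => //; exact: ltW.
    lra.
  have cphi : cos (pi - omega * th) = - cos (omega * th).
    by rewrite cosB cospi sinpi mul0r addr0 mulN1r.
  have P : pi - omega * th <= acos (2 * e - 1).
    apply: acos_le => //; rewrite cphi; lra.
  rewrite subr_ge0 hle /= /Delta_minus -/e.
  have -> : pi / omega - th = omega^-1 * (pi - omega * th).
    by rewrite mulrBr mulrA mulVf // mul1r mulrC.
  by rewrite ler_pM2l // invr_gt0.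
- have -> : (fun x => Delta_minus omega M x / (2 * Num.sqrt (M%:R * x) / omega))
          = (fun x => Delta_plus M x / (2 * Num.sqrt (M%:R * x))).
    apply: funext => x; rewrite /Delta_minus /Delta_plus invf_div.
    by rewrite -mulrA (mulrCA (acos _)) mulrA -mulrA mulKf.
  exact: lim_ratio.
Qed.
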